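(* Consider smoothed HS-$k$ with ground set $\mathcal B$ and collection $\mathcal C=\{C_1,\dots,C_n\}$, where each set weight $w_i$ is drawn independently from a distribution with density $f_i:[0,1]\to[0,\phi]$, and let $B=\max_{b\in\mathcal B}|\{C_i\in\mathcal C:b\in C_i\}|$. Then the expected maximum number of iterations of local search (over all initial feasible subsets and all improving sequences) is $O(3^{kB}|\mathcal B|^kn^2\phi)$, with an absolute hidden constant.
   Context: HS-$k$ (Hitting Set): given a finite ground set $\mathcal B$, a collection $\mathcal C=\{C_1,\dots,C_n\}$ of subsets of $\mathcal B$ with weights $w_i$, and an integer $m$, a feasible solution is $S\subseteq\mathcal B$ with $|S|\le m$; its weight is $\sum_{i:\,S\cap C_i\ne\emptyset}w_i$, to be maximized. Neighbours of $S$ are feasible subsets obtained by adding some $k_1$ elements and removing some $k_2$ elements with $k_1+k_2\le k$. A solution is a feasible subset with no neighbour of strictly larger weight; local search repeatedly moves to a strictly better neighbour. *)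

(* Defs.v *)
From HB Require Import structures.
From mathcomp Require Import all_boot all_order all_algebra.
From mathcomp Require Import all_classical all_reals all_analysis.

Set Implicit Arguments.
Unset Strict Implicit.
Unset Printing Implicit Defensive.

Import Order.TTheory GRing.Theory Num.Theory.

Local Open Scope ring_scope.

Section HS.
Variables (T : finType) (n : nat) (C : 'I_n -> {set T}) (m k : nat).

Definition feasible (S : {set T}) : bool := (#|S| <= m)%N.

Definition hs_weight {R : numDomainType} (w : 'I_n -> R) (S : {set T}) : R :=
  \sum_(i < n | S :&: C i != finset.set0) w i.

Definition kneighbour (S S' : {set T}) : bool :=
  [exists A : {set T}, exists Rm : {set T},
     [&& [disjoint A & S], Rm \subset S, (#|A| + #|Rm| <= k)%N &
         S' == (S :|: A) :\: Rm]].

Definition improving_step {R : numDomainType} (w : 'I_n -> R) (S S' : {set T}) : bool :=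
  [&& feasible S', kneighbour S S' & hs_weight w S < hs_weight w S'].

Definition has_run {R : numDomainType} (w : 'I_n -> R) (t : nat) : bool :=
  [exists S0 : {set T}, exists s : t.-tuple {set T},
     feasible S0 && path (improving_step w) S0 s].

(* Every improving run visits pairwise distinct sets
   (weights strictly increase), so it has fewer than 2^|B| steps; the
   bound in the index range is therefore never active. *)
Definition max_iterations {R : numDomainType} (w : 'I_n -> R) : nat :=
  \max_(t < (2 ^ #|T|).+1 | has_run w t) t.

Definition max_degree : nat := \max_(b : T) #|[set i : 'I_n | b \in C i]|.

End HS.

Definition mutually_independent {R : realType} {d : measure_display}
  {Omega : measurableType d} (P : probability Omega R) (n : nat)
  (X : 'I_n -> Omega -> R) : Prop :=
  forall A : 'I_n -> set R, (forall i, measurable (A i)) ->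
    P (\bigcap_i (X i @^-1` A i))%classic = (\prod_(i < n) P (X i @^-1` A i)%classic)%E.

Definition has_density_bounded {R : realType} {d : measure_display}
  {Omega : measurableType d} (P : probability Omega R) (X : Omega -> R)
  (f : R -> R) (phi : R) : Prop :=
  [/\ measurable_fun setT f,
      (forall x, 0 <= f x <= phi),
      (forall x, (x < 0 \/ 1 < x) -> f x = 0) &
      (forall A : set R, measurable A ->
         P (X @^-1` A)%classic = (\int[lebesgue_measure]_(x in A) (f x)%:E)%E)].

(* Main.v *)
Require Import Defs.
From HB Require Import structures.
From mathcomp Require Import all_boot all_order all_algebra.
From mathcomp Require Import all_classical all_reals all_analysis.
From mathcomp Require Import ring lra zify.

Import Order.TTheory GRing.Theory Num.Theory.
Set Implicit Arguments.
Unset Strict Implicit.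
Unset Printing Implicit Defensive.
Local Open Scope ring_scope.

Definition coef3 {R : pzRingType} (x : 'I_3) : R :=
  if (x : nat) == 1%N then 1 else if (x : nat) == 2%N then -1 else 0.

Definition affected (T : finType) n (C : 'I_n -> {set T}) k
  (h : {ffun 'I_k -> T}) : {set 'I_n} :=
  [set i | [exists b : 'I_k, h b \in C i]].

Definition cond (T : finType) n (C : 'I_n -> {set T}) k
  (h : {ffun 'I_k -> T}) (a : {ffun 'I_n -> 'I_3}) : bool :=
  [forall i, (a i != ord0) ==> (i \in affected C h)].

Definition gap {R : pzRingType} n (a : {ffun 'I_n -> 'I_3}) (v : 'I_n -> R) : R :=
  \sum_i coef3 (a i) * v i.

Section PartB.
Variables (R : realFieldType) (T : finType) (n : nat) (C : 'I_n -> {set T}) (m k : nat).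
Implicit Types (v : 'I_n -> R).

Lemma step_gap v S S' : kneighbour k S S' -> hs_weight C v S < hs_weight C v S' ->
  exists (h : {ffun 'I_k -> T}) a, cond C h a /\ hs_weight C v S' - hs_weight C v S = gap a v.
Proof.
case/existsP => A /existsP [Rm /and4P [dAS RmS cardk /eqP eS']] lt.
set U := A :|: Rm.
have keyU : forall i, [disjoint U & C i] -> (S' :&: C i) = (S :&: C i).
  move=> i dUC; apply/setP => x; rewrite eS' !inE.
  case xC: (x \in C i); rewrite ?andbF ?andbT //.
  have xU : x \notin U by rewrite (disjointFl dUC) // xC.
  move: xU; rewrite !inE negb_or => /andP [xA xRm]; rewrite (negbTE xA) (negbTE xRm) /=.
  by rewrite orbF.
case: (set_0Vmem U) => [U0 | [x0 x0U]].
  have : S' = S.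
    rewrite eS'; apply/setP => x; rewrite !inE.
    have := (@finset.in_set0 T x); rewrite -U0 !inE. case: (x \in A); case: (x \in Rm) => // _; by rewrite ?andbT ?andbF ?orbF.
  by move=> E; move: lt; rewrite E ltxx.
pose h := [ffun i : 'I_k => nth x0 (enum U) i].
pose hit S i := S :&: C i != finset.set0.
pose a := [ffun i => if hit S' i && ~~ hit S i then (inord 1 : 'I_3)
                     else if hit S i && ~~ hit S' i then (inord 2 : 'I_3) else ord0].
exists h, a; split.
  apply/forallP => i; apply/implyP => ai.
  have hne : hit S' i != hit S i.
    move: ai; rewrite /a ffunE.
    by case: (hit S' i); case: (hit S i).
  have : ~~ [disjoint U & C i].
    apply/negP => dUC; move: hne; by rewrite /hit keyU // eqxx.
  case/pred0Pn => x /andP [xU xC].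
  rewrite inE; apply/existsP.
  have xe : x \in enum U by rewrite mem_enum.
  have lt_k : (index x (enum U) < k)%N.
    have cU : (#|U| <= k)%N by apply: leq_trans cardk; case: (leq_card_setU A Rm).
    by apply: leq_trans cU; rewrite cardE index_mem.
  exists (Ordinal lt_k); by rewrite /h ffunE /= nth_index.
rewrite /hs_weight /gap [X in X - _]big_mkcond [X in _ - X]big_mkcond -sumrB.
apply: eq_bigr => i _.
rewrite /a ffunE /coef3 /hit.
case: (S' :&: C i != finset.set0); case: (S :&: C i != finset.set0) => /=;
  rewrite ?inordK //=; lra.
Qed.


Lemma path_incr (X : Type) (e : rel X) (g : X -> R) (eta : R) :
  (forall x y, e x y -> eta <= g y - g x) ->
  forall s x, path e x s -> (size s)%:R * eta <= g (last x s) - g x.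
Proof.
move=> He; elim => [|y s IH] x /=; first by rewrite mul0r subrr.
case/andP => exy ps; have := IH y ps; have := He _ _ exy.
rewrite -addn1 natrD mulrDl mul1r; lra.
Qed.

Lemma weight_bounds v : (forall i, 0 <= v i <= 1) ->
  forall S, 0 <= hs_weight C v S <= n%:R.
Proof.
move=> v01 S; apply/andP; split.
  by apply: sumr_ge0 => i _; case/andP: (v01 i).
rewrite /hs_weight big_mkcond /=.
apply: le_trans (_ : \sum_(i < n) (1 : R) <= n%:R).
  apply: ler_sum => i _; case: ifP => _; case/andP: (v01 i) => //.
by rewrite sumr_const card_ord.
Qed.

Lemma run_gap v : (forall i, 0 <= v i <= 1) -> forall t, (0 < t)%N ->
  has_run C m k v t ->
  [exists h : {ffun 'I_k -> T}, exists a, cond C h a && (0 < gap a v <= 2 * n%:R / t%:R)].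
Proof.
move=> v01 t t0 /existsP [S0 /existsP [s /andP [_ ps]]].
case: (boolP [exists h : {ffun 'I_k -> T}, exists a, cond C h a && (0 < gap a v <= 2 * n%:R / t%:R)]) => // none.
exfalso.
have n0 : (0 < n)%N.
  case: n C v v01 none ps => [|n'] //= C' v' _ _.
  move: (size_tuple s); case: (tval s) => [|x s'] /=; first by move=> E; move: t0; rewrite -E.
  move=> _ /andP [/and3P [_ _]]; by rewrite /hs_weight !big_ord0 ltxx.
pose eta : R := 2 * n%:R / t%:R.
have step : forall S S', improving_step C m k v S S' -> eta <= hs_weight C v S' - hs_weight C v S.
  move=> S S' /and3P [_ kn lt].
  have [h [a [ca E]]] := step_gap kn lt.
  rewrite E.
  have : ~~ (cond C h a && (0 < gap a v <= eta)).
    by apply/negP => H; move: none; rewrite negb_exists => /forallP /(_ h); rewrite negb_exists => /forallP /(_ a); rewrite H.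
  rewrite ca /= negb_and -ltNge -E subr_gt0 lt /= => /ltW //.
have := path_incr step ps; rewrite size_tuple.
have tne : t%:R != 0 :> R by rewrite pnatr_eq0 -lt0n.
have -> : t%:R * eta = 2 * n%:R by rewrite /eta [_ * (_ / _)]mulrC divfK.
have := weight_bounds v01 (last S0 s); have := weight_bounds v01 S0.
have : (1 : R) <= n%:R by rewrite ler1n.
lra.
Qed.


Lemma run_lt v t : has_run C m k v t -> (t < 2 ^ n)%N.
Proof.
case/existsP => S0 /existsP [s /andP [_ ps]].
pose pat (S : {set T}) : {set 'I_n} := [set i | S :&: C i != finset.set0].
pose wt' (p : {set 'I_n}) : R := \sum_(i < n | i \in p) v i.
have wtE : forall S, hs_weight C v S = wt' (pat S).
  by move=> S; rewrite /wt' /hs_weight; apply: eq_bigl => i; rewrite inE.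
have ps' : path (relpre (hs_weight C v) <%R) S0 s.
  by apply: sub_path ps => x y /and3P [].
rewrite -path_map in ps'.
have u : uniq (map (hs_weight C v) (S0 :: s)).
  apply: (sorted_uniq (@lt_trans _ _) (@ltxx _ _)); exact: ps'.
have u' : uniq (map pat (S0 :: s)).
  apply: (@map_uniq _ _ wt'); rewrite -map_comp.
  by rewrite (eq_map (g := hs_weight C v)) // => S /=; rewrite wtE.
have : (#|map pat (S0 :: s)| <= #|powerset [set: 'I_n]|)%N.
  apply/subset_leq_card/fintype.subsetP => x _; by rewrite powersetE finset.subsetT.
by rewrite card_powerset cardsT card_ord (card_uniqP u') size_map /= size_tuple.
Qed.

Lemma maxit_lt v : (max_iterations C m k v < 2 ^ n)%N.
Proof.
have p0 : (0 < 2 ^ n)%N by rewrite expn_gt0.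
rewrite -(prednK p0) ltnS; apply/bigmax_leqP => t /run_lt.
by rewrite -(prednK p0) ltnS.
Qed.

Lemma maxit_run v t : (0 < t)%N -> (t <= max_iterations C m k v)%N ->
  exists t', (t <= t')%N /\ has_run C m k v t'.
Proof.
move=> t0 le; case: (boolP [exists t' : 'I_(2 ^ #|T|).+1, (t <= t')%N && has_run C m k v t']).
  by case/existsP => t' /andP [a b]; exists t'.
rewrite negb_exists => /forallP H; exfalso.
case: t t0 le H => [|t] // _ le H.
have : (max_iterations C m k v <= t)%N.
  apply/bigmax_leqP => t' r; have := H t'; rewrite r andbT -ltnNge ltnS //.
by rewrite leqNgt le.
Qed.

End PartB.

Local Open Scope classical_set_scope.

Section PartA.
Context (R : realType) (d : measure_display) (Omega : measurableType d)
  (P : probability Omega R) (n : nat) (w : 'I_n -> Omega -> R)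
  (f : 'I_n -> R -> R) (phi : R).
Hypotheses (mw : forall i, measurable_fun setT (w i))
  (ind : mutually_independent P w)
  (dens : forall i, has_density_bounded P (w i) (f i) phi).

Lemma mpre i (A : set R) : measurable A -> measurable (w i @^-1` A).
Proof. by move=> mA; rewrite -[_ @^-1` _]setTI; apply: mw. Qed.

Lemma P_fin (A : set Omega) : measurable A -> P A = (fine (P A))%:E.
Proof.
move=> mA; rewrite fineK // ge0_fin_numE ?measure_ge0 //.
by apply: le_lt_trans (probability_le1 P mA) _; rewrite ltry.
Qed.

Lemma dens_bound i (A : set R) : measurable A ->
  (P (w i @^-1` A) <= phi%:E * lebesgue_measure A)%E.
Proof.
move=> mA; case: (dens i) => mf f0 _ Pf; rewrite Pf //.
rewrite -integral_cst //.
apply: ge0_le_integral => //.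
- by move=> x _; rewrite lee_fin; case/andP: (f0 x).
- apply/measurable_realfun.measurable_EFinP; exact: measurable_funS mf.
- by move=> x _; rewrite lee_fin; case/andP: (f0 x).
Qed.


Lemma phi_ge0 (i : 'I_n) : 0 <= phi.
Proof. by case: (dens i) => _ f0 _ _; case/andP: (f0 0) => a b; apply: le_trans b. Qed.

Lemma itv_bound i (lo hi : R) (b0 b1 : bool) : lo < hi ->
  (P (w i @^-1` [set` Interval (BSide b0 lo) (BSide b1 hi)]) <= (phi * (hi - lo))%:E)%E.
Proof.
move=> lh; apply: le_trans (dens_bound i (measurable_itv _)) _.
by rewrite lebesgue_measure_itv /= lte_fin lh /= -EFinD EFinM.
Qed.


Lemma sum_ind0 (M : nat) : 0 <= \sum_(l < M) (((l : nat) == 0%N)%:R : R) <= 1.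
Proof.
case: M => [|M']; first by rewrite big_ord0 lexx ler01.
by rewrite big_ord_recl /= big1 ?addr0 ?ler01 ?lexx.
Qed.

Section Grid.
Variables (a : 'I_n -> R) (j : 'I_n) (eps dl : R) (M : nat).
Hypotheses (haj : a j = 1 \/ a j = -1) (ha : forall i, `|a i| <= 1)
  (eps0 : 0 < eps) (dl0 : 0 < dl).

Definition cell (l : nat) : set R := [set` Interval (BSide true (l%:R * dl)) (BSide true (l.+1%:R * dl))].
Definition sg (g : {ffun 'I_n -> 'I_M}) : R :=
  \sum_(i < n | i != j) a i * ((g i)%:R * dl).
Definition lo (g : {ffun 'I_n -> 'I_M}) := - sg g - n%:R * dl.
Definition hi (g : {ffun 'I_n -> 'I_M}) := eps - sg g + n%:R * dl.
Definition Jset (g : {ffun 'I_n -> 'I_M}) : set R :=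
  if a j == 1 then [set` Interval (BSide false (lo g)) (BSide false (hi g))]
  else [set` Interval (BSide true (- hi g)) (BSide true (- lo g))].
Definition Aset (g : {ffun 'I_n -> 'I_M}) i : set R :=
  if i == j then (if (g j : nat) == 0%N then Jset g else set0) else cell (g i).
Definition Bset (g : {ffun 'I_n -> 'I_M}) : set Omega := \bigcap_i (w i @^-1` Aset g i).

Lemma mAset g i : measurable (Aset g i).
Proof.
rewrite /Aset /Jset /cell; case: ifP => _; last exact: measurable_itv.
case: ifP => _ //; case: ifP => _; exact: measurable_itv.
Qed.

Lemma mBset g : measurable (Bset g).
Proof.
rewrite /Bset; apply: (@fin_bigcap_measurable _ Omega 'I_n setT) => [|i _].
  exact: finite_finset.
by apply: mpre; apply: mAset.
Qed.

Lemma Jbound g : (P (w j @^-1` Jset g) <= (phi * (eps + 2 * n%:R * dl))%:E)%E.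
Proof.
have N0 : 0 <= n%:R * dl by rewrite mulr_ge0 // ltW.
have E : hi g - lo g = eps + 2 * n%:R * dl.
  rewrite /lo /hi -mulrA; move: (n%:R * dl) => N; move: (sg g) => x; lra.
have lh : lo g < hi g.
  rewrite -subr_gt0 E; move: N0 eps0; rewrite -mulrA; move: (n%:R * dl) => N; lra.
have p0 := phi_ge0 j.
rewrite /Jset; case: ifP => _.
  by apply: le_trans (itv_bound _ _ _ lh) _; rewrite E.
have lh' : - hi g < - lo g by rewrite ltrN2.
by apply: le_trans (itv_bound _ _ _ lh') _; rewrite opprK addrC E.
Qed.


Lemma in_cell l x : cell l x <-> l%:R * dl <= x < l.+1%:R * dl.
Proof. by rewrite /cell /= in_itv /=. Qed.

Lemma cell_uniq l l' x : cell l x -> cell l' x -> l = l'.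
Proof.
move=> /in_cell /andP [a1 a2] /in_cell /andP [b1 b2].
have h1 : l%:R * dl < l'.+1%:R * dl by apply: le_lt_trans b2.
have h2 : l'%:R * dl < l.+1%:R * dl by apply: le_lt_trans a2.
rewrite ltr_pM2r // ltr_nat ltnS in h1; rewrite ltr_pM2r // ltr_nat ltnS in h2.
by apply/eqP; rewrite eqn_leq h1 h2.
Qed.

Lemma cell_sum i : \sum_(l < M) fine (P (w i @^-1` cell l)) <= 1.
Proof.
have mF : forall l : 'I_M, measurable (w i @^-1` cell l).
  by move=> l; apply: mpre; exact: measurable_itv.
have triv : trivIset [set: 'I_M] (fun l : 'I_M => w i @^-1` cell l).
  move=> l l' _ _ [x [/= h1 h2]]; apply: val_inj; exact: cell_uniq h1 h2.
have := measure_bigsetU_ord P predT mF triv.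
have mU := @bigsetU_measurable _ Omega _ (index_enum 'I_M) predT _ (fun l _ => mF l).
have le1 := probability_le1 P mU.
rewrite (eq_bigr (fun l : 'I_M => (fine (P (w i @^-1` cell l)))%:E)); last by move=> l _; rewrite -P_fin.
rewrite sumEFin => E; by rewrite -lee_fin -E.
Qed.


Definition Fg (i : 'I_n) (l : 'I_M) : R :=
  if i == j then ((l : nat) == 0%N)%:R else fine (P (w i @^-1` cell l)).
Definition Kc : R := phi * (eps + 2 * n%:R * dl).

Lemma fine_ge0P (A : set Omega) : 0 <= fine (P A).
Proof. by apply: fine_ge0; apply: measure_ge0. Qed.

Lemma Kc_ge0 : 0 <= Kc.
Proof.
apply: mulr_ge0; first exact: phi_ge0 j.
by apply: addr_ge0; [exact: ltW|rewrite mulr_ge0 // ?mulr_ge0 // ltW].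
Qed.

Lemma PBg g : fine (P (Bset g)) <= Kc * \prod_i Fg i (g i).
Proof.
have E := ind (@mAset g).
have E2 : fine (P (Bset g)) = \prod_i fine (P (w i @^-1` Aset g i)).
  rewrite /Bset E (eq_bigr (fun i => (fine (P (w i @^-1` Aset g i)))%:E)).
    by rewrite prodEFin.
  by move=> i _; rewrite -P_fin //; apply: mpre; apply: mAset.
rewrite E2 (bigD1 j) //= [X in _ <= _ * X](bigD1 j) //=.
have -> : \prod_(i | i != j) fine (P (w i @^-1` Aset g i)) = \prod_(i | i != j) Fg i (g i).
  by apply: eq_bigr => i ij; rewrite /Aset /Fg (negbTE ij).
have p0 : 0 <= \prod_(i | i != j) Fg i (g i).
  by apply: prodr_ge0 => i ij; rewrite /Fg (negbTE ij) fine_ge0P.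
rewrite /Fg eqxx mulrA; apply: ler_wpM2r => //.
rewrite /Aset eqxx; case: ifP => _.
  rewrite mulr1; have := Jbound g; rewrite P_fin ?lee_fin //.
  by apply: mpre; rewrite /Jset; case: ifP => _; exact: measurable_itv.
by rewrite preimage_set0 measure0 /= mulr0.
Qed.

Lemma sumB : \sum_(g : {ffun 'I_n -> 'I_M}) fine (P (Bset g)) <= Kc.
Proof.
apply: (@le_trans _ _ (\sum_(g : {ffun 'I_n -> 'I_M}) Kc * \prod_i Fg i (g i))).
  by apply: ler_sum => g _; apply: PBg.
rewrite -mulr_sumr -bigA_distr_bigA /=.
rewrite -[X in _ <= X]mulr1; apply: ler_wpM2l; first exact: Kc_ge0.
apply: prodr_ile1 => i _; rewrite /Fg; case: eqP => _.
  exact: sum_ind0.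
apply/andP; split; last exact: cell_sum.
by apply: sumr_ge0 => l _; apply: fine_ge0P.
Qed.


Lemma grid_cover om : (forall i, 0 <= w i om < M%:R * dl) ->
  0 < \sum_i a i * w i om <= eps -> exists g, Bset g om.
Proof.
move=> wb /andP [Z0 Ze].
have tr : forall i, (Num.trunc (w i om / dl) < M)%N.
  move=> i; case/andP: (wb i) => w0 wM.
  have q0 : 0 <= w i om / dl by rewrite divr_ge0 // ltW.
  case/andP: (truncn_itv q0) => t1 _.
  rewrite -(ltr_nat R); apply: le_lt_trans t1 _; by rewrite ltr_pdivrMr.
have M0 : (0 < M)%N by case/andP: (wb j) => w0 wM; move: (le_lt_trans w0 wM); rewrite pmulr_lgt0 // ltr0n.
pose g := [ffun i => if i == j then Ordinal M0 else Ordinal (tr i)].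
have gv : forall i, i != j -> (g i : nat) = Num.trunc (w i om / dl).
  by move=> i ij; rewrite /g ffunE (negbTE ij).
have incell : forall i, i != j -> cell (g i) (w i om).
  move=> i ij; rewrite gv // in_cell; case/andP: (wb i) => w0 _.
  have q0 : 0 <= w i om / dl by rewrite divr_ge0 // ltW.
  case/andP: (truncn_itv q0) => t1 t2.
  by rewrite -ler_pdivlMr // t1 /= -ltr_pdivrMr.
exists g => i _ /=; rewrite /Aset; case: (eqVneq i j) => [->|ij]; last exact: incell.
have gj : (g j : nat) = 0%N by rewrite /g ffunE eqxx.
rewrite gj eqxx.
set Y := \sum_(i | i != j) a i * w i om.
have ZE : \sum_i a i * w i om = a j * w j om + Y by rewrite (bigD1 j).
have dY : `|Y - sg g| <= n%:R * dl.
  rewrite /Y /sg -sumrB.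
  apply: le_trans (ler_norm_sum _ _ _) _.
  apply: (@le_trans _ _ (\sum_(i | i != j) dl)).
    apply: ler_sum => k kj; rewrite -mulrBr normrM.
    have e1 := ha k.
    have : `|w k om - (g k)%:R * dl| <= dl.
      have := incell k kj; rewrite in_cell => /andP [c1 c2].
      rewrite ger0_norm ?subr_ge0 //; rewrite mulrSr mulrDl mul1r in c2; lra.
    move=> e2; rewrite -[X in _ <= X]mul1r; apply: ler_pM => //.
  rewrite big_mkcond /= (@le_trans _ _ (\sum_(i < n) dl)) //.
    by apply: ler_sum => k _; case: ifP => _ //; apply: ltW.
  by rewrite sumr_const card_ord mulr_natl.
move: dY; rewrite ler_norml => /andP [d1 d2].
have hlo : lo g < a j * w j om.
  rewrite /lo; move: Z0; rewrite ZE; lra.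
have hhi : a j * w j om <= hi g.
  rewrite /hi; move: Ze; rewrite ZE; lra.
rewrite /Jset; case: haj => aj; rewrite aj.
  by rewrite eqxx /= in_itv /=; rewrite aj mul1r in hlo hhi; rewrite hlo hhi.
have -> : ((-1 : R) == 1) = false by apply/eqP; lra.
rewrite /= in_itv /=; rewrite aj mulN1r in hlo hhi.
apply/andP; split; lra.
Qed.

End Grid.

End PartA.

Lemma le_int_nm (R : realType) (d : measure_display) (Omega : measurableType d)
  (mu : {measure set Omega -> \bar R}) (F G : Omega -> \bar R) :
  (forall x, (0 <= F x)%E) -> (forall x, (F x <= G x)%E) ->
  (\int[mu]_x F x <= \int[mu]_x G x)%E.
Proof.
move=> F0 FG; have G0 : forall x, (0 <= G x)%E by move=> x; apply: le_trans (F0 x) (FG x).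
rewrite !ge0_integralTE //; apply: ereal_sup_le => _ [h hF <-]; exists h => //.
by move=> x; apply: le_trans (hF x) (FG x).
Qed.

Lemma ub_seq (R : realType) (d : measure_display) (Omega : measurableType d)
  (mu : {measure set Omega -> \bar R}) (I : Type) (r : seq I) (p : pred I) (F : I -> set Omega) :
  (forall i, measurable (F i)) ->
  (mu (\big[setU/set0]_(i <- r | p i) F i) <= \sum_(i <- r | p i) mu (F i))%E.
Proof.
move=> mF; elim: r => [|x r IH]; first by rewrite !big_nil measure0.
rewrite !big_cons; case: ifP => _ //.
apply: le_trans (measureU2 _ _ _) _ => //; first exact: bigsetU_measurable.
exact: leeD.
Qed.

Lemma mem_bigU (T : Type) (I : eqType) (r : seq I) (p : pred I) (F : I -> set T) x i :
  i \in r -> p i -> F i x -> (\big[setU/set0]_(j <- r | p j) F j) x.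
Proof.
elim: r => [|y r IH] //; rewrite in_cons big_cons => /orP [/eqP <- pi Fi|ir pi Fi].
  by rewrite pi; left.
by case: ifP => _; [right|]; apply: IH.
Qed.

Lemma harmonic (R : realFieldType) (n : nat) :
  \sum_(t < 2 ^ n) (t.+1%:R : R)^-1 <= n.+1%:R.
Proof.
elim: n => [|n IH]; first by rewrite expn0 big_ord1 invr1.
rewrite expnS mul2n -addnn big_split_ord /= -(addn1 n.+1) natrD.
apply: lerD => //.
apply: (@le_trans _ _ (\sum_(t < 2 ^ n) ((2 ^ n)%:R : R)^-1)).
  apply: ler_sum => t _; rewrite lef_pV2 ?posrE ?ltr0n ?expn_gt0 //= ler_nat.
  by apply: leq_trans (leq_addr t _) _.
rewrite sumr_const card_ord -[_ *+ _]mulr_natl mulfV // pnatr_eq0 -lt0n expn_gt0 //.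
Qed.

Lemma count_min (N x : nat) : (\sum_(t < N) (t < x))%N = minn N x.
Proof.
elim: N => [|N IH]; first by rewrite big_ord0 min0n.
rewrite big_ord_recr /= IH.
case: (ltnP N x) => h /=; lia.
Qed.

Lemma count_sum (R : realFieldType) (N x : nat) : (x <= N)%N ->
  \sum_(t < N) (((t < x)%N)%:R : R) = x%:R.
Proof.
by move=> xN; rewrite -natr_sum count_min; congr (_%:R); apply/minn_idPr.
Qed.

Lemma card_bigcup_le (I T : finType) (S : I -> {set T}) :
  (#|(\bigcup_(b : I) S b)%SET| <= \sum_(b : I) #|S b|)%N.
Proof.
apply: (big_ind2 (fun (A : {set T}) (x : nat) => #|A| <= x)%N) => //.
- by rewrite cards0.
- move=> A x B y hA hB; apply: leq_trans (leq_add hA hB).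
  by case: (leq_card_setU A B).
Qed.

Lemma card_affected (T : finType) n (C : 'I_n -> {set T}) k (h : {ffun 'I_k -> T}) :
  (#|affected C h| <= k * max_degree C)%N.
Proof.
have -> : affected C h = (\bigcup_(b : 'I_k) [set i | h b \in C i])%SET.
  apply/setP => i; rewrite inE; apply/existsP/bigcupP => [[b hb]|[b _]].
    by exists b => //; rewrite inE.
  by rewrite inE => hb; exists b.
apply: leq_trans (card_bigcup_le _) _.
apply: (@leq_trans (\sum_(b : 'I_k) max_degree C)).
  apply: leq_sum => b _; rewrite /max_degree; exact: (@leq_bigmax _ (fun x => #|[set i | x \in C i]%SET|) (h b)).
by rewrite sum_nat_const card_ord.
Qed.

Lemma card_cond (T : finType) n (C : 'I_n -> {set T}) k (h : {ffun 'I_k -> T}) :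
  (#|[pred a | cond C h a]| <= 3 ^ (k * max_degree C))%N.
Proof.
apply: (@leq_trans #|pffun_on (ord0 : 'I_3) (affected C h) predT|).
  apply/subset_leq_card/fintype.subsetP => a; rewrite inE => /forallP ca.
  apply/familyP => i; case: ifP => hi //=.
  by move: (ca i); rewrite hi implybF negbK.
rewrite card_pffun_on card_ord; apply: leq_pexp2l => //; exact: card_affected.
Qed.

Section Main.
Context (R : realType) (T : finType) (n : nat) (C : 'I_n -> {set T}) (m k : nat)
  (d : measure_display) (Omega : measurableType d) (P : probability Omega R)
  (w : 'I_n -> Omega -> R) (f : 'I_n -> R -> R) (phi : R).
Hypotheses (mw : forall i, measurable_fun setT (w i))
  (ind : mutually_independent P w)
  (dens : forall i, has_density_bounded P (w i) (f i) phi)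
  (npos : (0 < n)%N).

Let i0 : 'I_n := Ordinal npos.

Definition Out : set R := `]-oo, 0[ `|` `]1, +oo[.
Definition Nset : set Omega := \big[setU/set0]_(i : 'I_n) (w i @^-1` Out).

Lemma mOut : measurable Out.
Proof. by apply: measurableU; exact: measurable_itv. Qed.

Lemma mNset : measurable Nset.
Proof. by apply: bigsetU_measurable => i _; apply: mpre => //; exact: mOut. Qed.

Lemma PNset : P Nset = 0%E.
Proof.
apply/eqP; rewrite eq_le measure_ge0 andbT.
apply: le_trans (ub_seq _ _ _ _) _ => [i|]; first by apply: mpre => //; exact: mOut.
rewrite big1 // => i _.
case: (dens i) => _ _ f01 Pf; apply: eq_trans (Pf Out mOut) _.
apply: integral0_eq => x [] /=; rewrite in_itv /= => h; rewrite f01 //;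
  [left|right]; move: h; by rewrite ?andbT.
Qed.


Definition epst (t : nat) : R := 2 * n%:R / t.+1%:R.
Definition dlt (t : nat) : R := 2 / t.+1%:R.
Definition ca (a : {ffun 'I_n -> 'I_3}) : 'I_n -> R := fun i => coef3 (a i).

Definition Bt t (a : {ffun 'I_n -> 'I_3}) (g : {ffun 'I_n -> 'I_(t.+2)}) : set Omega :=
  match [pick i | a i != ord0] with
  | Some j => Bset w (ca a) j (epst t) (dlt t) g
  | None => set0
  end.

Definition Et t : set Omega := Nset `|`
  \big[setU/set0]_(h : {ffun 'I_k -> T})
    \big[setU/set0]_(a | cond C h a) \big[setU/set0]_(g : {ffun 'I_n -> 'I_(t.+2)}) Bt a g.

Lemma mBt t a (g : {ffun 'I_n -> 'I_(t.+2)}) : measurable (Bt a g).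
Proof. by rewrite /Bt; case: pickP => [j _|_ //]; exact: mBset. Qed.

Lemma mEt t : measurable (Et t).
Proof.
apply: measurableU; first exact: mNset.
do 3 (apply: bigsetU_measurable => ? _).
exact: mBt.
Qed.

Lemma epst_gt0 t : 0 < epst t.
Proof. by rewrite /epst divr_gt0 ?mulr_gt0 ?ltr0n. Qed.

Lemma dlt_gt0 t : 0 < dlt t.
Proof. by rewrite /dlt divr_gt0 ?ltr0n. Qed.

Lemma phi0 : 0 <= phi.
Proof. exact: (phi_ge0 dens i0). Qed.

Lemma Kc_t t : Kc n phi (epst t) (dlt t) = 6 * n%:R * phi / t.+1%:R.
Proof.
rewrite /Kc /epst /dlt.
have t0 : t.+1%:R != 0 :> R by rewrite pnatr_eq0.
by field.
Qed.

Lemma sumBt t a : (\sum_(g : {ffun 'I_n -> 'I_(t.+2)}) P (Bt a g) <=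
  (6 * n%:R * phi / t.+1%:R)%:E)%E.
Proof.
rewrite /Bt; case: pickP => [j _|_].
  rewrite (eq_bigr (fun g => (fine (P (Bset w (ca a) j (epst t) (dlt t) g)))%:E)); last first.
    by move=> g _; rewrite -P_fin //; exact: mBset.
  rewrite sumEFin lee_fin -Kc_t.
  exact: (sumB mw ind dens (ca a) j t.+2 (epst_gt0 t) (dlt_gt0 t)).
rewrite big1 ?measure0 // lee_fin; apply: mulr_ge0; last by rewrite invr_ge0.
by apply: mulr_ge0; [rewrite mulr_ge0|exact: phi0].
Qed.


Lemma K_ge0 t : 0 <= 6 * n%:R * phi / t.+1%:R.
Proof.
apply: mulr_ge0; last by rewrite invr_ge0.
by apply: mulr_ge0; [rewrite mulr_ge0|exact: phi0].
Qed.

Lemma PEt t : (P (Et t) <=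
  ((#|T| ^ k * 3 ^ (k * max_degree C))%:R * (6 * n%:R * phi / t.+1%:R))%:E)%E.
Proof.
set K := 6 * n%:R * phi / t.+1%:R.
have K0 : 0 <= K := K_ge0 t.
have mI1 : forall (h : {ffun 'I_k -> T}) a,
    measurable (\big[setU/set0]_(g : {ffun 'I_n -> 'I_(t.+2)}) Bt a g).
  by move=> h a; apply: bigsetU_measurable => g _; exact: mBt.
have mI2 : forall (h : {ffun 'I_k -> T}),
    measurable (\big[setU/set0]_(a | cond C h a) \big[setU/set0]_(g : {ffun 'I_n -> 'I_(t.+2)}) Bt a g).
  by move=> h; apply: bigsetU_measurable => a _; exact: mI1.
apply: le_trans (measureU2 _ _ _) _; first exact: mNset.
  by apply: bigsetU_measurable => h _; exact: mI2.
rewrite [X in (X + _)%E](_ : forall Y, Y = P Nset -> Y = 0%E) //; last by move=> Y ->; exact: PNset.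
rewrite add0e.
apply: le_trans (ub_seq _ _ _ _) _; first exact: mI2.
apply: (@le_trans _ _ (\sum_(h : {ffun 'I_k -> T}) ((3 ^ (k * max_degree C))%:R * K)%:E)).
  apply: lee_sum => h _.
  apply: le_trans (ub_seq _ _ _ _) _; first by move=> a; exact: mI1 h a.
  apply: (@le_trans _ _ (\sum_(a | cond C h a) K%:E)).
    apply: lee_sum => a _; apply: le_trans (ub_seq _ _ _ _) (sumBt t a).
    by move=> g; exact: mBt.
  rewrite sumEFin lee_fin sumr_const -[K *+ _]mulr_natl; apply: ler_wpM2r => //.
  by rewrite ler_nat; exact: card_cond.
rewrite sumEFin lee_fin sumr_const card_ffun !card_ord.
rewrite le_eqVlt; apply/orP; left; apply/eqP; rewrite natrM -[X in X = _]mulr_natl; ring.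
Qed.

Lemma coef3_pm (x : 'I_3) : x != ord0 -> coef3 x = 1 :> R \/ coef3 x = -1 :> R.
Proof.
case: x => [[|[|[|x]]] Hx] //= _; rewrite /coef3 /=; by [left|right].
Qed.

Lemma coef3_le1 (x : 'I_3) : `|coef3 x : R| <= 1.
Proof. rewrite /coef3; case: ifP => _; first by rewrite normr1. case: ifP => _; by rewrite ?normrN1 ?normr0. Qed.

Lemma pointwise om : ((max_iterations C m k (fun i => w i om))%:R <=
  \sum_(t < 2 ^ n) \1_(Et t) om :> R).
Proof.
set v := fun i => w i om.
have Xlt := maxit_lt C m k v.
case: (pselect (Nset om)) => [Nom|Nom].
  apply: (@le_trans _ _ ((2 ^ n)%:R)); first by rewrite ler_nat ltnW.
  rewrite (eq_bigr (fun _ => 1)); first by rewrite sumr_const card_ord.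
  by move=> t _; rewrite indicE mem_set //; left.
have v01 : forall i, 0 <= v i <= 1.
  move=> i; apply/andP; split; rewrite leNgt; apply/negP => h; apply: Nom;
    apply: (mem_bigU (i:=i)) => //=; try exact: mem_index_enum.
    by left; rewrite /= in_itv /= h.
  by right; rewrite /= in_itv /= h.
rewrite -(count_sum R (ltnW Xlt)); apply: ler_sum => t _.
case: ltnP => h /=; last by rewrite indicE ler0n.
rewrite indicE; suff H : Et t om by rewrite mem_set.
right.
have [t' [tt' rt']] := maxit_run (ltn0Sn t) h.
have t'0 : (0 < t')%N := leq_trans (ltn0Sn t) tt'.
have /existsP [hh /existsP [a /and3P [ca' g0 gle]]] := run_gap v01 t'0 rt'.
apply: (mem_bigU (i:=hh)) => //.
apply: (mem_bigU (i:=a)) => //.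
have [g Hg] : exists g : {ffun 'I_n -> 'I_(t.+2)}, Bt a g om.
  rewrite /Bt; case: pickP => [j aj|none].
    apply: grid_cover.
    - exact: coef3_pm.
    - by move=> i; exact: coef3_le1.
    - exact: dlt_gt0.
    - move=> i; case/andP: (v01 i) => a1 a2; rewrite a1 /=.
      apply: le_lt_trans a2 _.
      rewrite /dlt mulrA ltr_pdivlMr ?ltr0n // mul1r -natrM ltr_nat; lia.
    - apply/andP; split; first exact: g0.
      apply: le_trans gle _; rewrite /epst; apply: ler_wpM2l.
        by rewrite mulr_ge0.
      by rewrite lef_pV2 ?posrE ?ltr0n // ler_nat.
  exfalso; move: g0; rewrite /gap big1 ?ltxx // => i _.
  by move: (none i) => /= /negbFE /eqP ->; rewrite /coef3 /= mul0r.
by apply: (mem_bigU (i:=g)) => //; exact: mem_index_enum.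
Qed.

Lemma main_pos :
  (\int[P]_(om in setT) ((max_iterations C m k (fun i => w i om))%:R)%:E
    <= (12 * (3 ^ (k * max_degree C) * #|T| ^ k * n ^ 2)%:R * phi)%:E)%E.
Proof.
apply: le_trans (@le_int_nm R d Omega P (fun om => ((max_iterations C m k (fun i => w i om))%:R)%:E) (fun om => (\sum_(t < 2 ^ n) \1_(Et t) om)%:E) _ _) _.
- by move=> x; rewrite lee_fin ler0n.
- by move=> x; rewrite lee_fin; exact: pointwise.
rewrite (eq_integral (fun om => \sum_(t < 2 ^ n) (\1_(Et t) om)%:E)); last first.
  by move=> om _; rewrite sumEFin.
rewrite ge0_integral_sum //; last first.
  move=> t; apply/measurable_realfun.measurable_EFinP.
  by apply: measurable_realfun.measurable_indic; exact: mEt.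
rewrite (eq_bigr (fun t : 'I_(2 ^ n) => P (Et t))); last first.
  move=> t _; apply: eq_trans (integral_indic _ _ _) _ => //; first exact: mEt.
  by rewrite setIT.
set Q : R := (#|T| ^ k * 3 ^ (k * max_degree C))%:R.
apply: (@le_trans _ _ (\sum_(t < 2 ^ n) ((Q * (6 * n%:R * phi / t.+1%:R))%:E))).
  by apply: lee_sum => t _; exact: PEt t.
rewrite sumEFin lee_fin.
have Q0 : 0 <= Q by rewrite ler0n.
have p0 := phi0.
have N1 : 1 <= n%:R :> R by rewrite ler1n.
apply: (@le_trans _ _ (Q * (6 * n%:R * phi) * n.+1%:R)).
  rewrite (eq_bigr (fun t : 'I_(2 ^ n) => Q * (6 * n%:R * phi) * (t.+1%:R)^-1)); last first.
    by move=> t _; rewrite mulrA.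
  rewrite -mulr_sumr; apply: ler_wpM2l; last exact: harmonic.
  by rewrite mulr_ge0 // mulr_ge0 // mulr_ge0.
have -> : (3 ^ (k * max_degree C) * #|T| ^ k * n ^ 2)%:R = Q * n%:R ^+ 2 :> R.
  by rewrite /Q !natrM !natrX; ring.
rewrite [n.+1%:R]mulrSr.
have H : 0 <= Q * n%:R * phi by rewrite mulr_ge0 // mulr_ge0 // ler0n.
have -> : Q * (6 * n%:R * phi) * (n%:R + 1) = (6 * (Q * n%:R * phi)) * (n%:R + 1) by ring.
have -> : 12 * (Q * n%:R ^+ 2) * phi = (6 * (Q * n%:R * phi)) * (2 * n%:R) by ring.
apply: ler_wpM2l; first by rewrite mulr_ge0.
lra.
Qed.

End Main.


Unset Implicit Arguments.
Local Close Scope classical_set_scope.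

Theorem mainTheorem16 (R : realType) :
  exists c : R, 0 < c /\
  forall (T : finType) (n : nat) (C : 'I_n -> {set T}) (m k : nat)
    (d : measure_display) (Omega : measurableType d) (P : probability Omega R)
    (w : 'I_n -> Omega -> R) (f : 'I_n -> R -> R) (phi : R),
    (forall i, measurable_fun setT (w i)) ->
    mutually_independent P w ->
    (forall i, has_density_bounded P (w i) (f i) phi) ->
    (\int[P]_(om in setT) ((max_iterations C m k (fun i => w i om))%:R)%:E
      <= (c * (3 ^ (k * max_degree C) * #|T| ^ k * n ^ 2)%:R * phi)%:E)%E.
Proof.
exists 12; split; first by rewrite ltr0n.
move=> T n C m k d Omega P w f phi mw ind dens.
case: (posnP n) => [n0|npos]; last exact: main_pos.
have X0 : forall om, max_iterations C m k (fun i => w i om) = 0%N.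
  move=> om; have := maxit_lt C m k (fun i => w i om).
  have e : (2 ^ n = 1)%N by rewrite n0.
  by rewrite e ltnS leqn0 => /eqP.
rewrite (eq_integral (fun _ => 0%E)); last by move=> om _; rewrite X0.
have e2 : (n ^ 2 = 0)%N by rewrite n0.
by rewrite integral0 e2 muln0 mulr0 mul0r.
Qed.
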